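(* In the single-item all-pay auction with budgets described in the context, let $L=\min\{B_1,B_2,v_1,v_2\}$. In a Nash equilibrium $(F_1,F_2)$, if for some $i\in\{1,2\}$ we have $\underline{x}_i<\overline{x}_i$ and $\underline{x}_{-i}=\overline{x}_{-i}$, then $Supp(F_i)=\{0,L\}$ and $F_i(0)\le 1-\frac{2L}{v_{-i}}$. Moreover, player $i$'s expected utility is $0$ and player $-i$'s expected utility is at most $v_{-i}-2L$.
   Context: Single-item all-pay auction with budgets. There are two players $i\in\{1,2\}$; $-i$ denotes the opponent of $i$. Player $i$ has budget $B_i\ge 0$ and valuation $v_i>0$ for a single item. A pure strategy of player $i$ is a bid $x_i\in[0,B_i]$; a mixed strategy is a probability distribution on $[0,B_i]$, described by its cumulative distribution function $F_i$. The player with the higher bid wins the item. Tie-breaking: if $x_1=x_2=\min\{B_1,B_2,v_1,v_2\}$ and $\min\{B_i,v_i\}>\min\{B_{-i},v_{-i}\}$ for some $i$, then player $i$ wins; in all other ties each player wins with probability $\frac12$. Player $i$'s utility is $v_i-x_i$ if he wins and $-x_i$ if he loses. A Nash equilibrium is a pair $(F_1,F_2)$ such that each $F_i$ maximizes player $i$'s expected utility against $F_{-i}$ over all mixed strategies on $[0,B_i]$. $Supp(F_i)$ is the support of $F_i$, $\overline{x}_i=\sup Supp(F_i)$ and $\underline{x}_i=\inf Supp(F_i)$. *)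

(* Defs.v *)
From HB Require Import structures.
From mathcomp Require Import all_boot all_order all_algebra.
From mathcomp Require Import all_classical all_reals all_analysis.
Set Implicit Arguments. Unset Strict Implicit. Unset Printing Implicit Defensive.
Import Order.TTheory GRing.Theory Num.Theory.
Local Open Scope classical_set_scope.
Local Open Scope ring_scope.

(* Players are indexed by [bool]; the opponent of [i] is [~~ i]. *)

(* Probability that player [i] wins the item when bidding [x] against the
   opponent's bid [y], with the tie-breaking rule of the paper:
   at a tie x = y = L := min{B1,B2,v1,v2}, the player with the strictly larger
   min{B,v} wins; every other tie is broken uniformly at random. *)
Definition Lval {R : realType} (B v : bool -> R) : R :=
  Num.min (Num.min (B true) (B false)) (Num.min (v true) (v false)).

Definition win_prob {R : realType} (B v : bool -> R) (i : bool) (x y : R) : R :=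
  if y < x then 1
  else if x < y then 0
  else if (x == Lval B v) && (Num.min (B (~~ i)) (v (~~ i)) < Num.min (B i) (v i))
  then 1
  else if (x == Lval B v) && (Num.min (B i) (v i) < Num.min (B (~~ i)) (v (~~ i)))
  then 0
  else 2^-1.

Definition utility {R : realType} (B v : bool -> R) (i : bool) (x y : R) : R :=
  v i * win_prob B v i x y - x.

Definition is_strategy {R : realType} (B : bool -> R) (i : bool)
  (mu : probability R R) : Prop :=
  mu [set` `[0, B i]] = 1%E.

Definition exp_utility {R : realType} (B v : bool -> R) (i : bool)
  (mi mo : probability R R) : \bar R :=
  (\int[mi]_x \int[mo]_y (utility B v i x y)%:E)%E.

Definition nash_eq {R : realType} (B v : bool -> R)
  (mu : bool -> probability R R) : Prop :=
  (forall i, is_strategy B i (mu i)) /\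
  (forall i (nu : probability R R), is_strategy B i nu ->
     (exp_utility B v i nu (mu (~~ i)) <= exp_utility B v i (mu i) (mu (~~ i)))%E).

Definition msupp {R : realType} (mu : probability R R) : set R :=
  [set x : R | forall e : R, 0 < e -> (0 < mu [set` `](x - e)%R, (x + e)%R[])%E].

Definition bid_cdf {R : realType} (mu : probability R R) (t : R) : \bar R :=
  mu [set` `]-oo, t]].

(* Main.v *)
Require Import Defs.
From HB Require Import structures.
From mathcomp Require Import all_boot all_order all_algebra.
From mathcomp Require Import all_classical all_reals all_analysis.
From mathcomp Require Import ring lra.
From mathcomp Require Import measurable_realfun.
Import Order.TTheory GRing.Theory Num.Theory.
Local Open Scope classical_set_scope.
Local Open Scope ring_scope.
Set Implicit Arguments. Unset Strict Implicit. Unset Printing Implicit Defensive.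

Lemma null_out (R : realType) (P : probability R R) (A X : set R) :
  measurable A -> measurable X -> P A = 1%E -> (forall y, X y -> ~ A y) -> P X = 0%E.
Proof.
move=> mA mX PA XA; apply/eqP; rewrite eq_le measure_ge0 andbT.
have <- : P (~` A) = 0%E by rewrite probability_setC // PA subee.
apply: le_measure; rewrite ?inE //; first exact: measurableC.

Qed.

Lemma notin_supp (R : realType) (P : probability R R) (A : set R) (x e : R) :
  measurable A -> P A = 1%E -> 0 < e ->
  (forall y, x - e < y < x + e -> ~ A y) -> ~ msupp P x.
Proof.
move=> mA PA e0 H /(_ e e0); rewrite (null_out mA _ PA) ?ltxx //.
Qed.

Lemma null_seg (R : realType) (P : probability R R) (a b : R) :
  (forall x, a <= x <= b -> exists2 e, 0 < e & P [set` `]x-e, x+e[] = 0%E) ->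
  P [set` `[a, b]] = 0%E.
Proof.
move=> H.
have [ba|ab] := ltP b a.
  apply/eqP; rewrite eq_le measure_ge0 andbT -(measure0 P).
  apply: le_measure; rewrite ?inE //.
  by move=> y /=; rewrite in_itv /= => /andP[ay yb]; move: (le_trans ay yb); rewrite leNgt ba.
pose T := [set t | a <= t <= b /\ P [set` `[a, t]] = 0%E].
have Ta : T a.
  split; first by rewrite lexx ab.
  have [e e0 He] := H a (ltac:(by rewrite lexx ab)).
  apply/eqP; rewrite eq_le measure_ge0 andbT -He.
  apply: le_measure; rewrite ?inE //.
  move=> y /=; rewrite !in_itv /= => /andP[ay ya].
  have -> : y = a by apply/le_anti; rewrite ay ya.
  apply/andP; split; lra.
have hsT : has_sup T.
  split; first by exists a.
  by exists b => t [/andP[_ ->]].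
set s := sup T.
have as_ : a <= s by exact: sup_upper_bound.
have sb : s <= b by apply: ge_sup; [exists a | move=> t [/andP[_ ->]]].
have [e e0 He] := H s (ltac:(by rewrite as_ sb)).
have [t Tt st] := sup_adherent e0 hsT.
have ts : t <= s := sup_upper_bound hsT Tt.
rewrite -/s in st.
case: Tt => /andP[a_t tb] Pt.
have key : forall u, a <= u -> u <= b -> u < s + e -> P [set` `[a, u]] = 0%E.
  move=> u au ub us.
  apply/eqP; rewrite eq_le measure_ge0 andbT.
  apply: (@le_trans _ _ (P ([set` `[a, t]] `|` [set` `]s - e, s + e[]))).
    apply: le_measure; rewrite ?inE //; first exact: measurableU.
    move=> y /=; rewrite !in_itv /= => /andP[ay yu].
    have [yt|ty] := leP y t; first by left; rewrite andbT.
    by right; apply/andP; split; lra.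
  apply: (le_trans (measureU2 _ _ _)) => //.
  rewrite [X in (X + _)%E](_ : _ = 0%E); last exact: Pt.
  by rewrite [X in (_ + X)%E](_ : _ = 0%E) ?adde0 //; exact: He.
have bs : b <= s.
  rewrite leNgt; apply/negP => sb'.
  pose u := Num.min (s + e / 2) b.
  have uT : T u.
    split.
      apply/andP; split; last by rewrite /u ge_min lexx orbT.
      by rewrite /u le_min ab andbT; lra.
    apply: key; first by rewrite /u le_min ab andbT; lra.
      by rewrite /u ge_min lexx orbT.
    by rewrite /u gt_min; apply/orP; left; lra.
  have := sup_upper_bound hsT uT; rewrite -/s /u ge_min.
  move=> /orP[]; lra.
by apply: key => //; lra.
Qed.

Lemma null_ball (R : realType) (P : probability R R) (x : R) :
  ~ msupp P x -> exists2 e, 0 < e & P [set` `]x-e, x+e[] = 0%E.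
Proof.
rewrite /msupp /= => /existsNP [e] /not_implyP [e0 /negP]; rewrite -leNgt => Hle.
by exists e => //; apply/eqP; rewrite eq_le Hle measure_ge0.
Qed.

Lemma point_mass (R : realType) (P : probability R R) (c : R) :
  (forall x, x != c -> ~ msupp P x) -> P [set c] = 1%E.
Proof.
move=> H.
pose F := fun n : nat => [set` `[c - n%:R - 1, c - (n.+1%:R)^-1]] `|`
                        [set` `[c + (n.+1%:R)^-1, c + n%:R + 1]].
have n0 (n : nat) : 0 < (n.+1%:R : R)^-1 by rewrite invr_gt0 ltr0n.
have mF n : measurable (F n) by apply: measurableU; exact: measurable_itv.
have PF n : P (F n) = 0%E.
  apply/eqP; rewrite eq_le measure_ge0 andbT.
  apply: (le_trans (measureU2 _ _ _)); [exact: measurable_itv|exact: measurable_itv|].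
  rewrite [X in (X + _)%E](_ : _ = 0%E); last first.
    apply: null_seg => x /andP[_ xc]; apply: null_ball; apply: H.
    rewrite lt_eqF //; have := n0 n; set k := (n.+1%:R)^-1 in xc *; lra.
  rewrite [X in (_ + X)%E](_ : _ = 0%E) ?adde0 //.
  apply: null_seg => x /andP[xc _]; apply: null_ball; apply: H.
  by rewrite gt_eqF //; have := n0 n; set k := (n.+1%:R)^-1 in xc *; lra.
have negC : P.-negligible (~` [set c]).
  have nU : P.-negligible (\bigcup_n F n).
    by apply: (@negligible_bigcup _ _ _ P F) => n; exists (F n); exact: And3 (mF n) (PF n) (subset_refl _).
  apply: (negligibleS _ nU).
  move=> y /= /eqP yc.
  pose d := `|y - c|.
  have d0 : 0 < d by rewrite normr_gt0 subr_eq0.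
  pose n := Num.Def.trunc (d + d^-1).
  have hn := truncnS_gt (d + d^-1).
  have di0 : 0 < d^-1 by rewrite invr_gt0.
  have h1 : d < n.+1%:R by rewrite -/n in hn; lra.
  have h2 : (n.+1%:R : R)^-1 < d.
    rewrite -[X in _ < X]invrK ltf_pV2 ?posrE ?ltr0n ?invr_gt0 //.
    by rewrite -/n in hn; lra.
  exists n => //.
  have [yc'|cy] := ltP y c.
    have dE : d = c - y by rewrite /d ltr0_norm ?subr_lt0 // opprB.
    left => /=; rewrite in_itv /=; apply/andP; split; rewrite -natr1 in h1 h2 *; lra.
  have dE : d = y - c by rewrite /d ger0_norm ?subr_ge0.
  right => /=; rewrite in_itv /=; apply/andP; split; rewrite -natr1 in h1 h2 *; lra.
have PC : P (~` [set c]) = 0%E by apply: measure_negligible => //; exact: measurableC.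
rewrite -(probability_setT P) -(setUCr [set c]) measureU //.
- by rewrite [X in (_ + X)%E](_ : _ = 0%E) ?adde0 //; exact: PC.
- exact: measurableC.
- exact: setICr.
Qed.

Lemma step_meas (R : realType) (f : R -> R) (a : R) :
  (forall x y, x < a -> y < a -> f x = f y) ->
  (forall x y, a < x -> a < y -> f x = f y) -> measurable_fun setT f.
Proof.
move=> Hl Hr.
have -> : f = (fun x => f (a - 1) * \1_[set` `]-oo, a[] x + f a * \1_[set a] x
                       + f (a + 1) * \1_[set` `]a, +oo[] x).
  apply/funext => x; rewrite !indicE.
  have [xa|ax|->] := ltgtP x a.
  - rewrite mem_set /=; last by rewrite in_itv /= xa.
    rewrite memNset; last by move=> /= e; rewrite e ltxx in xa.
    rewrite memNset; last by rewrite /= in_itv /= andbT ltNge ltW.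
    by rewrite mulr1 !mulr0 !addr0; apply: Hl => //; lra.
  - rewrite memNset; last by rewrite /= in_itv /= ltNge ltW.
    rewrite memNset; last by move=> /= e; rewrite e ltxx in ax.
    rewrite mem_set /=; last by rewrite in_itv /= ax.
    by rewrite mulr1 !mulr0 !add0r; apply: Hr => //; lra.
  - rewrite memNset; last by rewrite /= in_itv /= ltxx.
    rewrite mem_set //.
    rewrite memNset; last by rewrite /= in_itv /= ltxx.
    by rewrite mulr1 !mulr0 add0r addr0.
apply: measurable_realfun.measurable_funD; first apply: measurable_realfun.measurable_funD.
- by apply: measurable_realfun.measurable_funM; [exact: measurable_cst|apply: measurable_realfun.measurable_indic; exact: measurable_itv].
- by apply: measurable_realfun.measurable_funM; [exact: measurable_cst|apply: measurable_realfun.measurable_indic; exact: measurable_set1].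
- by apply: measurable_realfun.measurable_funM; [exact: measurable_cst|apply: measurable_realfun.measurable_indic; exact: measurable_itv].
Qed.

Lemma wp_lt (R : realType) (B v : bool -> R) (i : bool) (x y : R) :
  y < x -> win_prob B v i x y = 1.
Proof. by move=> h; rewrite /win_prob h. Qed.

Lemma wp_gt (R : realType) (B v : bool -> R) (i : bool) (x y : R) :
  x < y -> win_prob B v i x y = 0.
Proof. by move=> h; rewrite /win_prob h ltNge (ltW h). Qed.

Lemma util_meas_y (R : realType) (B v : bool -> R) (i : bool) (x : R) :
  measurable_fun [set: R] (fun y : R => ((utility B v i x y)%:E : \bar R)).
Proof.
apply/measurable_realfun.measurable_EFinP; apply: measurable_realfun.measurable_funB; last exact: measurable_cst.
apply: measurable_realfun.measurable_funM; first exact: measurable_cst.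
by apply: (@step_meas _ _ x) => y z h1 h2;
  first [by rewrite !wp_lt | by rewrite !wp_gt].
Qed.

Lemma util_meas_x (R : realType) (B v : bool -> R) (i : bool) (y : R) :
  measurable_fun [set: R] (fun x : R => ((utility B v i x y)%:E : \bar R)).
Proof.
apply/measurable_realfun.measurable_EFinP; apply: measurable_realfun.measurable_funB; last exact: measurable_id.
apply: measurable_realfun.measurable_funM; first exact: measurable_cst.
by apply: (@step_meas _ (fun x => win_prob B v i x y) y) => x z h1 h2;
  first [by rewrite !wp_lt | by rewrite !wp_gt].
Qed.

Local Open Scope ereal_scope.

Lemma dirac_int (R : realType) (P : probability R R) (c : R) (f : R -> \bar R) :
  P [set c] = 1 -> measurable_fun [set: R] f -> \int[P]_x f x = f c.
Proof.
move=> Pc mf.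
rewrite (eq_measure_integral (\d_c)); last first.
  move=> A mA _; transitivity (((c \in A)%:R)%:E : \bar R); last by symmetry; exact: diracE.
  have [/set_mem cA|cA] := boolP (c \in A).
    apply/eqP; rewrite eq_le probability_le1 //= -Pc.
    by apply: le_measure; rewrite ?inE // => y /= ->.
  apply: (null_out (A := [set c])) => // y Ay yc; move: cA; rewrite -yc.
  by rewrite mem_set.
by rewrite integral_dirac // diracE in_setT mul1e.
Qed.

Lemma restrictD (R : realType) (Q : probability R R) (D : set R) (f : R -> \bar R) :
  measurable D -> Q D = 1 -> measurable_fun [set: R] f ->
  \int[Q]_x f x = \int[Q]_(x in D) f x.
Proof.
move=> mD QD mf.
rewrite -(setUCr D) integral_setU //; first last.
- by rewrite /disj_set setICr.
- by rewrite setUCr.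
- exact: measurableC.
rewrite (null_set_integral (N := ~` D)) ?adde0 //.
- exact: measurableC.
- by apply: measurable_funS mf.
- have h := probability_setC Q mD.
  by apply: (etrans h); rewrite QD subee.
Qed.

Lemma int_set1 (R : realType) (Q : probability R R) (a : R) (f : R -> \bar R) :
  \int[Q]_(x in [set a]) f x = f a * Q [set a].
Proof.
rewrite (eq_integral (cst (f a))); last by move=> x /set_mem ->.
exact: integral_cst.
Qed.

Lemma two_point (R : realType) (Q : probability R R) (a b : R) (f : R -> \bar R) :
  a != b -> Q [set a; b] = 1 -> measurable_fun [set: R] f ->
  \int[Q]_x f x = f a * Q [set a] + f b * Q [set b].
Proof.
move=> ab Qab mf.
have mab : measurable [set a; b] by apply: measurableU.
rewrite (restrictD mab Qab mf) integral_setU //.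
- by rewrite !int_set1.
- by apply: measurable_funS mf.
- rewrite /disj_set; apply/eqP; rewrite -subset0 => x [/= -> ba].
  by move: ab; rewrite ba eqxx.
Qed.

Lemma concentrate (R : realType) (Q : probability R R) (D : set R) (g : R -> R) (m K : R) :
  measurable D -> Q D = 1 -> measurable_fun [set: R] g ->
  (forall x, D x -> (`|g x| <= K)%R) ->
  \int[Q]_x (g x)%:E = m%:E -> (forall x, D x -> (g x <= m)%R) ->
  Q (D `&` [set x | (g x < m)%R]) = 0.
Proof.
move=> mD QD mg gK Ig gm.
have mgE : measurable_fun [set: R] (fun x => (g x)%:E) by exact/measurable_EFinP.
have igD : Q.-integrable D (EFin \o g).
  apply: measurable_bounded_integrable => //.
  - by change (Q D < +oo); rewrite QD ltry.
  - by apply: measurable_funS mg.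
  - exists K; split; first exact: num_real.
    move=> M KM x Dx /=; apply: (le_trans (gK x Dx)); exact: ltW.
have icD : Q.-integrable D (EFin \o cst m) by apply: finite_measure_integrable_cst.
have I0 : \int[Q]_(x in D) `|(m - g x)%:E| = 0.
  rewrite (eq_integral (fun x => ((cst m x)%:E - (g x)%:E))); last first.
    move=> x /set_mem Dx; rewrite abse_EFin ger0_norm ?subr_ge0 ?gm //.
  rewrite integralB_EFin //.
  have -> : \int[Q]_(x in D) (cst m x)%:E = m%:E.
    rewrite (eq_integral (cst m%:E)) //.
    transitivity (m%:E * Q D); first exact: integral_cst.
    by change (m%:E * Q D = m%:E); rewrite QD mule1.
  by rewrite -(restrictD mD QD mgE) Ig subee.
have mh : measurable_fun D (fun x => (m - g x)%:E).
  apply/measurable_EFinP; apply: measurable_funB; first exact: measurable_cst.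
  by apply: measurable_funS mg.
have [N [mN QN sub]] := (ae_eq_integral_abs Q mD mh).1 I0.
apply/eqP; rewrite eq_le measure_ge0 andbT -QN.
have mlt : measurable [set x | (g x < m)%R].
  rewrite (_ : [set x | _] = g @^-1` [set` `]-oo, m[]); last first.
    by apply/seteqP; split => x /=; rewrite in_itv.
  rewrite -(setTI (g @^-1` _)); apply: mg => //; exact: measurable_itv.
apply: le_measure; rewrite ?inE //; first exact: measurableI.
move=> x [Dx gx]; apply: sub => /(_ Dx) /= /eqP; rewrite eqe subr_eq0 => /eqP gxm.
by move: gx; rewrite /= -gxm ltxx.
Qed.

Lemma bnd_int_fin (R : realType) (Q : probability R R) (D : set R) (g : R -> R) (K : R) :
  measurable D -> Q D = 1 -> measurable_fun [set: R] g ->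
  (forall x, D x -> (`|g x| <= K)%R) ->
  exists m, \int[Q]_x (g x)%:E = m%:E.
Proof.
move=> mD QD mg gK.
have mgE : measurable_fun [set: R] (fun x => (g x)%:E) by exact/measurable_EFinP.
have igD : Q.-integrable D (EFin \o g).
  apply: measurable_bounded_integrable => //.
  - by change (Q D < +oo); rewrite QD ltry.
  - by apply: measurable_funS mg.
  - exists K; split; first exact: num_real.
    move=> M KM x Dx /=; apply: (le_trans (gK x Dx)); exact: ltW.
exists (fine (\int[Q]_(x in D) (g x)%:E)).
by rewrite (restrictD mD QD mgE) fineK //; exact: (integrable_fin_num mD igD).
Qed.

Local Close Scope ereal_scope.

Lemma supp_sub (R : realType) (P : probability R R) (a b x : R) :
  P [set` `[a, b]] = 1%E -> msupp P x -> a <= x <= b.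
Proof.
move=> Pab Sx; rewrite leNgt; apply/andP; split.
  apply/negP => xa; apply: (notin_supp (e := a - x) _ Pab) Sx.
  - exact: measurable_itv.
  - by rewrite subr_gt0.
  - by move=> y /andP[_ yx] /=; rewrite in_itv /= => /andP[ay _]; clear Pab; lra.
rewrite leNgt; apply/negP => bx; apply: (notin_supp (e := x - b) _ Pab) Sx.
- exact: measurable_itv.
- by rewrite subr_gt0.
- by move=> y /andP[xy _] /=; rewrite in_itv /= => /andP[_ yb]; clear Pab; lra.
Qed.

Lemma pos_atom (R : realType) (Q : probability R R) (A : set R) (s e : R) :
  measurable A -> Q A = 1%E -> msupp Q s -> 0 < e ->
  (forall y, s - e < y < s + e -> A y -> y = s) -> (0 < Q [set s])%E.
Proof.
move=> mA QA Ss e0 H.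
have QnA : Q (~` A) = 0%E.
  have h := probability_setC Q mA.
  by apply: (etrans h); rewrite QA subee.
apply: (lt_le_trans (Ss e e0)).
apply: (@le_trans _ _ (Q ([set s] `|` ~` A))).
  apply: le_measure; rewrite ?inE //; first by apply: measurableU => //; exact: measurableC.
  move=> y /= hy; have [Ay|nAy] := pselect (A y); last by right.
  by left; apply: H => //; move: hy; rewrite in_itv.
apply: (le_trans (measureU2 _ _ _)) => //; first exact: measurableC.
by rewrite [X in (_ + X)%E](_ : _ = 0%E) ?adde0 //; exact: QnA.
Qed.

Lemma full_of_null (R : realType) (Q : probability R R) (A : set R) :
  measurable A -> Q (~` A) = 0%E -> Q A = 1%E.
Proof.
move=> mA QC.
rewrite -(probability_setT Q) -(setUCr A) measureU //.
- by rewrite [X in (_ + X)%E](_ : _ = 0%E) ?adde0 //; exact: QC.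
- exact: measurableC.
- exact: setICr.
Qed.

Lemma tie_cases (R : realType) (B v : bool -> R) (i : bool) (x : R) :
  [\/ win_prob B v i x x = 1 /\ win_prob B v (~~ i) x x = 0,
      win_prob B v i x x = 0 /\ win_prob B v (~~ i) x x = 1 |
      win_prob B v i x x = 2^-1 /\ win_prob B v (~~ i) x x = 2^-1].
Proof.
rewrite /win_prob ltxx negbK.
have [xL|xL] := boolP (x == Lval B v); rewrite /= ?andbF ?andbT /=; last by apply: Or33.
have [h1|h1] := boolP (Num.min (B (~~ i)) (v (~~ i)) < Num.min (B i) (v i)).
  by apply: Or31; rewrite ltNge (ltW h1).
have [h2|h2] := boolP (Num.min (B i) (v i) < Num.min (B (~~ i)) (v (~~ i))).
  by apply: Or32.
by apply: Or33.
Qed.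

Lemma wp_range (R : realType) (B v : bool -> R) (i : bool) (x y : R) :
  0 <= win_prob B v i x y <= 1.
Proof.
rewrite /win_prob; repeat case: ifP => _; rewrite ?lexx ?ler01 //.
by rewrite invr_ge0 ler0n invf_le1 ?ler1n // ltr0n.
Qed.

Lemma util_bound (R : realType) (B v : bool -> R) (i : bool) (x y : R) :
  0 < v i -> 0 <= x <= B i -> `|utility B v i x y| <= v i + B i.
Proof.
move=> v0 /andP[x0 xB]; rewrite /utility.
have /andP[w0 w1] := wp_range B v i x y.
have h1 : 0 <= v i * win_prob B v i x y by rewrite mulr_ge0 // ltW.
have h2 : v i * win_prob B v i x y <= v i by rewrite ler_piMr // ltW.
rewrite ler_norml; apply/andP; split; lra.
Qed.

Lemma Lval_eq (R : realType) (B v : bool -> R) (i : bool) (c : R) :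
  B i = c -> c <= B (~~ i) -> c <= v i -> c <= v (~~ i) -> Lval B v = c.
Proof.
rewrite /Lval; case: i => /= <- h1 h2 h3; apply/le_anti/andP; split;
  rewrite ?ge_min ?le_min ?lexx ?h1 ?h2 ?h3 ?orbT //.
Qed.

Unset Implicit Arguments.

Theorem lemma3 (R : realType) (B v : bool -> R)
  (hB : forall j, 0 <= B j) (hv : forall j, 0 < v j)
  (mu : bool -> probability R R) (i : bool) :
  nash_eq B v mu ->
  inf (msupp (mu i)) < sup (msupp (mu i)) ->
  inf (msupp (mu (~~ i))) = sup (msupp (mu (~~ i))) ->
  [/\ msupp (mu i) = [set 0; Lval B v],
      (bid_cdf (mu i) 0 <= (1 - 2 * Lval B v / v (~~ i))%:E)%E,
      exp_utility B v i (mu i) (mu (~~ i)) = 0%E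
    & (exp_utility B v (~~ i) (mu (~~ i)) (mu i) <= (v (~~ i) - 2 * Lval B v)%:E)%E].
Proof.
move=> [Hstrat Hbest] Hlt Heq.
set j := ~~ i.
set P := mu j. set Q := mu i.
have PB : P [set` `[0, B j]] = 1%E := Hstrat j.
have QB : Q [set` `[0, B i]] = 1%E := Hstrat i.
have mDi : measurable [set` `[0, B i]] by exact: measurable_itv.
set c := inf (msupp P).
have Sc : forall x, msupp P x -> x = c.
  move=> x Sx.
  have hl : has_lbound (msupp P) by exists 0 => y /(supp_sub PB) /andP[-> _].
  have hs : has_sup (msupp P).
    by split; [exists x | exists (B j) => y /(supp_sub PB) /andP[_ ->]].
  apply/le_anti/andP; split; last exact: ge_inf.
  by rewrite /c Heq; exact: sup_upper_bound.
have Pc : P [set c] = 1%E.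
  apply: point_mass => x xc Sx; move: xc; by rewrite (Sc x Sx) eqxx.
have Sc_c : msupp P c.
  move=> e e0; apply: (@lt_le_trans _ _ (P [set c])); first by rewrite Pc lte01.
  apply: le_measure; rewrite ?inE //; try exact: measurable_itv.
  by move=> y /= ->; rewrite in_itv /=; apply/andP; split; lra.
have /andP[c0 cBj] := supp_sub PB Sc_c.
have strat_d : forall k x, 0 <= x <= B k -> is_strategy B k (\d_x).
  move=> k x hx; rewrite /is_strategy.
  transitivity (((x \in [set` `[0, B k]])%:R)%:E : \bar R); first exact: diracE.
  by rewrite mem_set //= in_itv /= hx.
have EUi : forall nu : probability R R,
    exp_utility B v i nu P = (\int[nu]_x (utility B v i x c)%:E)%E.
  move=> nu; rewrite /exp_utility; apply: eq_integral => x _.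
  exact: dirac_int Pc (util_meas_y B v i x).
set g := fun x => utility B v i x c.
have mg : measurable_fun [set: R] g.
  by apply/measurable_EFinP; exact: util_meas_x.
have gK : forall x, [set` `[0, B i]] x -> `|g x| <= v i + B i.
  by move=> x /=; rewrite in_itv /= => hx; apply: util_bound.
have [m Im] := bnd_int_fin mDi QB mg gK.
have dev : forall x, 0 <= x <= B i -> g x <= m.
  move=> x hx; have := Hbest i (\d_x) (strat_d i x hx).
  rewrite !EUi Im (dirac_int (c := x)) ?lee_fin //.
  - transitivity (((x \in [set x])%:R)%:E : \bar R); first exact: diracE.
    by rewrite mem_set.
  - exact: util_meas_x.
have Z := concentrate mDi QB mg gK Im (fun x (hx : [set` `[0, B i]] x) =>
   dev x (ltac:(by move: hx => /=; rewrite in_itv))).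
have gE1 : forall x, x < c -> g x = - x.
  by move=> x xc; rewrite /g /utility wp_gt // mulr0 sub0r.
have gE2 : forall x, c < x -> g x = v i - x.
  by move=> x xc; rewrite /g /utility wp_lt // mulr1.
have sub : forall x, 0 <= x <= B i -> m <= g x -> x = 0 \/ x = c.
  move=> x /andP[x0 xB] mx.
  have gx : g x <= m by apply: dev; rewrite x0 xB.
  have [xc|cx|->] := ltgtP x c; [left | exfalso | by right].
  - apply/eqP; rewrite eq_le x0 andbT leNgt; apply/negP => xpos.
    have := dev (x / 2) (ltac:(apply/andP; split; lra)).
    rewrite gE1 ?gE1 // in mx *; lra.
  - have := dev ((c + x) / 2) (ltac:(apply/andP; split; lra)).
    rewrite gE2 ?gE2 // in mx *; lra.
set A := [set (0:R); c].
have mA : measurable A by apply: measurableU; exact: measurable_set1.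
have QnD : Q (~` [set` `[0, B i]]) = 0%E.
  have h := probability_setC Q mDi.
  by apply: (etrans h); rewrite QB subee.
have QA : Q A = 1%E.
  apply: full_of_null => //.
  apply/eqP; rewrite eq_le measure_ge0 andbT.
  have mZ : measurable ([set` `[0, B i]] `&` [set x | g x < m]).
    apply: measurableI => //.
    rewrite (_ : [set x | _] = g @^-1` [set` `]-oo, m[]); last first.
      by apply/seteqP; split => x /=; rewrite in_itv.
    rewrite -(setTI (g @^-1` _)); apply: mg => //; exact: measurable_itv.
  apply: (@le_trans _ _ (Q (~` [set` `[0, B i]] `|` ([set` `[0, B i]] `&` [set x | g x < m])))).
    apply: le_measure; rewrite ?inE //; [exact: measurableC|by apply: measurableU => //; exact: measurableC|].
    move=> x /= nAx; have [xD|xD] := boolP (0 <= x <= B i); last first.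
      by left; rewrite /= in_itv /=; apply/negP.
    right; split; first by rewrite /= in_itv /= xD.
    rewrite /= ltNge; apply/negP => mx; apply: nAx.
    by case: (sub x xD mx) => ->; [left|right].
  apply: (le_trans (measureU2 _ _ _)) => //; first exact: measurableC.
  rewrite [X in (X + _)%E](_ : _ = 0%E); last exact: QnD.
  by rewrite [X in (_ + X)%E](_ : _ = 0%E) ?adde0 //; exact: Z.
have QnA : Q (~` A) = 0%E.
  have h := probability_setC Q mA.
  by apply: (etrans h); rewrite QA subee.
have SA : forall x, msupp Q x -> x = 0 \/ x = c.
  move=> x Sx; have [->|x0] := eqVneq x 0; first by left.
  have [->|xc] := eqVneq x c; first by right.
  exfalso; apply: (notin_supp (e := Num.min `|x| `|x - c|) mA QA) Sx.
    by rewrite lt_min !normr_gt0 subr_eq0 x0 xc.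
  have e1 : Num.min `|x| `|x - c| <= `|x| by rewrite ge_min lexx.
  have e2 : Num.min `|x| `|x - c| <= `|x - c| by rewrite ge_min lexx orbT.
  move=> y hy [/= ey|/= ey]; rewrite ey in hy.
  - have : `|x| < Num.min `|x| `|x - c| by rewrite ltr_norml; lra.
    lra.
  - have : `|x - c| < Num.min `|x| `|x - c| by rewrite ltr_norml; lra.
    lra.
have [s1 [s2 [S1 S2 s12]]] : exists s1 s2, [/\ msupp Q s1, msupp Q s2 & s1 != s2].
  apply: contrapT => H; move: Hlt; rewrite -/Q.
  case: (pselect (exists s, msupp Q s)) => [[s Ss]|nS].
    have -> : msupp Q = [set s].
      apply/seteqP; split => [x Sx|x /= ->//] /=.
      apply: contrapT => xs; apply: H; exists x, s; split => //; exact/eqP.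
    by rewrite inf1 sup1 ltxx.
  have -> : msupp Q = set0.
    by apply/seteqP; split => [x Sx|x //]; apply: nS; exists x.
  by rewrite inf0 sup0 ltxx.
have [S0 SQc cn0] : [/\ msupp Q 0, msupp Q c & c != 0].
  case: (SA s1 S1) => e1; case: (SA s2 S2) => e2; rewrite e1 e2 in S1 S2 s12;
    rewrite ?eqxx // in s12.
  - by split => //; rewrite eq_sym.
have cpos : 0 < c by rewrite lt_neqAle eq_sym cn0 c0.
have /andP[_ cBi] := supp_sub QB SQc.
have Q0pos : (0 < Q [set 0%R])%E.
  apply: (pos_atom (e := c) mA QA S0 cpos) => y hy [//|/= yc].
  by rewrite yc in hy; lra.
have Qcpos : (0 < Q [set c])%E.
  apply: (pos_atom (e := c) mA QA SQc cpos) => y hy [/= y0|//].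
  by rewrite y0 in hy; lra.
set p := fine (Q [set 0%R]). set q := fine (Q [set c]).
have Q0 : Q [set 0%R] = p%:E by rewrite fineK //; exact: fin_num_measure.
have Qc : Q [set c] = q%:E by rewrite fineK //; exact: fin_num_measure.
have ppos : 0 < p by rewrite -lte_fin -Q0.
have qpos : 0 < q by rewrite -lte_fin -Qc.
have pq : p + q = 1.
  have h : Q A = (Q [set 0%R] + Q [set c])%E.
    apply: measureU; [exact: measurable_set1|exact: measurable_set1|].
    by apply/seteqP; split => // x [/= -> /esym/eqP]; rewrite (negbTE cn0).
  by move: h; rewrite QA Q0 Qc -EFinD => /esym/eqP; rewrite eqe => /eqP.
have atomZ : forall x, 0 <= x <= B i -> (0 < Q [set x])%E -> g x = m.
  move=> x hx Qx; apply/le_anti; rewrite dev //= leNgt; apply/negP => gxm.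
  have : (Q [set x] <= 0)%E.
    rewrite -Z; apply: le_measure; rewrite ?inE //; try exact: measurable_set1.
      apply: measurableI => //.
      rewrite (_ : [set x | _] = g @^-1` [set` `]-oo, m[]); last first.
        by apply/seteqP; split => y /=; rewrite in_itv.
      rewrite -(setTI (g @^-1` _)); apply: mg => //; exact: measurable_itv.
    by move=> y /= ->; split => //=; rewrite in_itv /= hx.
  by rewrite leNgt Qx.
have m0 : m = 0.
  by rewrite -(atomZ 0) ?lexx ?hB // gE1 // oppr0.
have gc : g c = 0 by rewrite -m0; apply: atomZ => //; rewrite c0 cBi.
have EUi0 : exp_utility B v i Q P = 0%E by rewrite EUi Im m0.
have dich : c = B i \/ v i <= c.
  have [cv|vc] := ltP c (v i); last by right.
  left; apply/le_anti; rewrite cBi /= leNgt; apply/negP => cb.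
  pose y := (c + Num.min (B i) (v i)) / 2.
  have cm : c < Num.min (B i) (v i) by rewrite lt_min cb cv.
  have ym1 : y < Num.min (B i) (v i) by rewrite /y; lra.
  have ym2 : c < y by rewrite /y; lra.
  have h1 : Num.min (B i) (v i) <= B i by rewrite ge_min lexx.
  have h2 : Num.min (B i) (v i) <= v i by rewrite ge_min lexx orbT.
  have := dev y (ltac:(apply/andP; split; lra)).
  rewrite gE2 // m0; lra.
have Hj : forall nu, is_strategy B j nu ->
    (exp_utility B v j nu Q <= exp_utility B v j P Q)%E.
  by move=> nu; have := Hbest j nu; rewrite /j negbK.
have c0' : (0:R) != c by rewrite eq_sym.
have EUj : forall nu : probability R R, exp_utility B v j nu Q =
    (\int[nu]_y (utility B v j y 0 * p + utility B v j y c * q)%:E)%E.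
  move=> nu; rewrite /exp_utility; apply: eq_integral => y _.
  rewrite (two_point c0' QA (util_meas_y B v j y)) Q0 Qc.
  by rewrite -!EFinM -EFinD.
have mj : measurable_fun [set: R]
    (fun y => ((utility B v j y 0 * p + utility B v j y c * q)%:E : \bar R)).
  apply/measurable_EFinP; apply: measurable_funD; apply: measurable_funM;
    (try exact: measurable_cst); apply/measurable_EFinP; exact: util_meas_x.
have EUjP : exp_utility B v j P Q =
    ((utility B v j c 0 * p + utility B v j c c * q)%:E)%E.
  by rewrite EUj (dirac_int Pc mj).
have EUjd : forall y, 0 <= y <= B j -> (utility B v j y 0 * p + utility B v j y c * q)
    <= (utility B v j c 0 * p + utility B v j c c * q).
  move=> y hy; rewrite -lee_fin -EUjP.
  have := Hj (\d_y) (strat_d j y hy); rewrite EUj (dirac_int (c := y)) //.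
  transitivity (((y \in [set y])%:R)%:E : \bar R); first exact: diracE.
  by rewrite mem_set.
have wj0 : utility B v j c 0 = v j - c by rewrite /utility wp_lt // mulr1.
set kj := win_prob B v j c c.
set ki := win_prob B v i c c.
have gcE : v i * ki - c = 0 by exact: gc.
have /andP[kj0 kj1] : 0 <= kj <= 1 by exact: wp_range.
have pE : p = 1 - q by lra.
have hX : c <= q * (v j * kj).
  rewrite leNgt; apply/negP => hlt.
  have X0 : 0 <= q * (v j * kj) by rewrite mulr_ge0 ?mulr_ge0 // ltW.
  pose y := (c - q * (v j * kj)) / 2.
  have y0 : 0 < y by rewrite /y; lra.
  have yc : y < c by rewrite /y; lra.
  have := EUjd y (ltac:(apply/andP; split; lra)).
  rewrite wj0 /utility wp_lt // wp_gt // -/kj.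
  have E : (v j * 1 - y) * p + (v j * 0 - y) * q - ((v j - c) * p + (v j * kj - c) * q)
           = c - y - q * (v j * kj) by rewrite pE; ring.
  move=> h; have : c - y - q * (v j * kj) <= 0 by rewrite -E subr_le0.
  rewrite /y; lra.
have [ki12 kj12] : ki = 2^-1 /\ kj = 2^-1.
  case: (tie_cases B v i c) => [[h1 h2]|[h1 h2]|//].
  - by exfalso; move: hX; rewrite /kj /j h2 mulr0 mulr0; lra.
  - by exfalso; move: gcE; rewrite /ki h1 mulr0; lra.
have cv : c = v i / 2 by move: gcE; rewrite ki12; lra.
have cB : c = B i.
  case: dich => // vc; exfalso; have := hv i; lra.
have hq : c <= (q * v j) / 2 by rewrite -mulrA; rewrite kj12 in hX.
have q1 : q <= 1 by lra.
have cvj : c <= v j.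
  have : q * v j <= v j by rewrite ler_piMl // ltW.
  lra.
have Lc : Lval B v = c.
  apply: (Lval_eq (i := i)) => //; rewrite ?cv ?cvj //; have := hv i; lra.
rewrite Lc; split => //.
- apply/seteqP; split => x.
    by move/SA => [->|->]; [left|right].
  by case => /= ->.
- rewrite /bid_cdf.
  apply: (@le_trans _ _ (Q ([set 0%R] `|` ~` A))).
    apply: le_measure; rewrite ?inE //; try exact: measurable_itv.
      by apply: measurableU; [exact: measurable_set1|exact: measurableC].
    move=> y /=; rewrite in_itv /= => y0.
    have [->|yn0] := eqVneq y 0; first by left.
    right => -[] /= h; first by rewrite h eqxx in yn0.
    by move: y0; rewrite h; lra.
  apply: (le_trans (measureU2 _ _ _)) => //; first exact: measurableC.
  rewrite [X in (_ + X)%E](_ : _ = 0%E) ?adde0; last exact: QnA.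
  change (Q [set 0%R] <= (1 - 2 * c / v j)%:E)%E; rewrite Q0 lee_fin pE.
  have : 2 * c / v j <= q by rewrite ler_pdivrMr //; lra.
  lra.
- rewrite EUjP lee_fin wj0 /utility -/kj pE.
  have hX' : c <= v j * kj * q by rewrite mulrC.
  rewrite mulrBr mulr1 !mulrBl kj12; lra.
Qed.
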